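(* Let $n\ge1$, $\preceq$ an admissible order on $L([0,1])$, $F\colon L([0,1])^2\to L([0,1])$, $G\colon L([0,1])^n\to L([0,1])$. The IV Sugeno-like $FG$-functional $\mathbf S_m^{F,G}$ is non-decreasing (in each argument, w.r.t. $\preceq$) for every IV fuzzy measure $m$ whenever: (i) $F(\cdot,\mathbf1)$ is non-decreasing, $G=f\circ\mathrm{Proj}_1$ for some non-decreasing $f\colon L([0,1])\to L([0,1])$; or (ii) $F$ is non-decreasing (in each variable), $G=f\circ\vee$ for some non-decreasing $f\colon L([0,1])\to L([0,1])$.
   Context: $N=\{1,\dots,n\}$. $L([0,1])=\{[a,b]:0\le a\le b\le1\}$, $\mathbf0=[0,0]$, $\mathbf1=[1,1]$. An admissible order $\preceq$ is a total order on $L([0,1])$ with $[a,b]\preceq[c,d]$ whenever $a\le c$, $b\le d$. $\vee$ denotes maximum w.r.t. $\preceq$; all monotonicity is w.r.t. $\preceq$; $\mathrm{Proj}_1(X_1,\dots,X_n)=X_1$. An IV fuzzy measure w.r.t. $\preceq$ is $m\colon2^N\to L([0,1])$, $m(\emptyset)=\mathbf0$, $m(N)=\mathbf1$, $m(A)\preceq m(B)$ for $A\subseteq B$. For a permutation $\sigma$, $E_{\sigma(i)}=\{\sigma(i),\dots,\sigma(n)\}$. $\mathbf S_m^{F,G}(X_1,\dots,X_n)=G\big(F(X_{\sigma(1)},m(E_{\sigma(1)})),\dots,F(X_{\sigma(n)},m(E_{\sigma(n)}))\big)$ with $\sigma$ any permutation such that $X_{\sigma(1)}\preceq\dots\preceq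 X_{\sigma(n)}$; it is defined when this value does not depend on the choice of $\sigma$ for all inputs. *)

(* Defs.v *)
From HB Require Import structures.
From mathcomp Require Import all_boot all_order all_algebra.
From mathcomp Require Import fingroup perm.
From mathcomp Require Import reals.
Set Implicit Arguments. Unset Strict Implicit. Unset Printing Implicit Defensive.
Import Order.TTheory GRing.Theory Num.Theory.
Local Open Scope ring_scope.

Record ivl (R : realType) := Ivl {
  lo : R; hi : R;
  ivlP : (0 <= lo) && (lo <= hi) && (hi <= 1) }.

Lemma ivl0P (R : realType) : (0 <= (0:R)) && (0 <= (0:R)) && ((0:R) <= 1).
Proof. by rewrite lexx ler01. Qed.
Lemma ivl1P (R : realType) : (0 <= (1:R)) && (1 <= (1:R)) && ((1:R) <= 1).
Proof. by rewrite lexx ler01. Qed.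
Definition ivl0 (R : realType) : ivl R := @Ivl R 0 0 (ivl0P R).
Definition ivl1 (R : realType) : ivl R := @Ivl R 1 1 (ivl1P R).

Definition admissible (R : realType) (le : ivl R -> ivl R -> Prop) : Prop :=
  [/\ (forall x, le x x),
      (forall x y, le x y -> le y x -> x = y),
      (forall x y z, le x y -> le y z -> le x z),
      (forall x y, le x y \/ le y x) &
      (forall x y, lo x <= lo y -> hi x <= hi y -> le x y)].

Definition nondecr (R : realType) (le : ivl R -> ivl R -> Prop)
  (f : ivl R -> ivl R) : Prop := forall x y, le x y -> le (f x) (f y).

Definition iv_fuzzy_measure (R : realType) (le : ivl R -> ivl R -> Prop) (n : nat)
  (m : {set 'I_n} -> ivl R) : Prop :=
  [/\ m set0 = ivl0 R, m setT = ivl1 R &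
      (forall A B : {set 'I_n}, A \subset B -> le (m A) (m B))].

Definition sorting (R : realType) (le : ivl R -> ivl R -> Prop) (n : nat)
  (s : {perm 'I_n}) (X : 'I_n -> ivl R) : Prop :=
  forall i j : 'I_n, (i <= j)%N -> le (X (s i)) (X (s j)).

Definition Eset (n : nat) (s : {perm 'I_n}) (i : 'I_n) : {set 'I_n} :=
  [set s j | j : 'I_n & (i <= j)%N].

Definition Sval (R : realType) (n : nat) (F : ivl R -> ivl R -> ivl R)
  (G : ('I_n -> ivl R) -> ivl R) (m : {set 'I_n} -> ivl R)
  (s : {perm 'I_n}) (X : 'I_n -> ivl R) : ivl R :=
  G (fun i => F (X (s i)) (m (Eset s i))).

(* S_m^{F,G} is non-decreasing: for X <= Y componentwise, and any admissible
   (sorting) permutations s of X and t of Y, the values compare. *)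
Definition S_nondecr (R : realType) (le : ivl R -> ivl R -> Prop) (n : nat)
  (F : ivl R -> ivl R -> ivl R) (G : ('I_n -> ivl R) -> ivl R)
  (m : {set 'I_n} -> ivl R) : Prop :=
  forall (X Y : 'I_n -> ivl R) (s t : {perm 'I_n}),
    (forall i, le (X i) (Y i)) -> sorting le s X -> sorting le t Y ->
    le (Sval F G m s X) (Sval F G m t Y).

(* Main.v *)
Require Import Defs.
From mathcomp Require Import all_boot all_order all_algebra.
From mathcomp Require Import fingroup perm.
From mathcomp Require Import reals.
Set Implicit Arguments. Unset Strict Implicit. Unset Printing Implicit Defensive.

Lemma seq_max (R : realType) (le : ivl R -> ivl R -> Prop) (I : eqType)
  (Y : I -> ivl R) : admissible le ->
  forall (s : seq I) x0, exists j, forall i, i \in x0 :: s -> le (Y i) (Y j).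
Proof.
case=> refl _ trans tot _; elim=> [|a s IH] x0.
  by exists x0 => i; rewrite inE => /eqP ->.
have [j Hj] := IH x0.
case: (tot (Y a) (Y j)) => H.
  exists j => i; rewrite !inE => /orP[/eqP->|/orP[/eqP->|Hi]].
  - by apply: Hj; rewrite inE eqxx.
  - exact: H.
  - by apply: Hj; rewrite inE Hi orbT.
exists a => i; rewrite !inE => /orP[/eqP->|/orP[/eqP->|Hi]].
- by apply: trans H; apply: Hj; rewrite inE eqxx.
- exact: refl.
- by apply: trans H; apply: Hj; rewrite inE Hi orbT.
Qed.

Lemma fin_max (R : realType) (le : ivl R -> ivl R -> Prop) (n : nat)
  (Y : 'I_n.+1 -> ivl R) : admissible le ->
  exists j, forall i, le (Y i) (Y j).
Proof.
move=> adm; have [j Hj] := seq_max Y adm (enum 'I_n.+1) ord0.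
by exists j => i; apply: Hj; rewrite inE mem_enum orbT.
Qed.

Theorem proposition11 (R : realType) (n : nat) (le : ivl R -> ivl R -> Prop)
  (F : ivl R -> ivl R -> ivl R) (G : ('I_n.+1 -> ivl R) -> ivl R) :
  admissible le ->
  ((nondecr le (fun x => F x (ivl1 R)) /\
    exists f, nondecr le f /\ forall Y, G Y = f (Y ord0))
   \/
   ((forall y, nondecr le (fun x => F x y)) /\ (forall x, nondecr le (F x)) /\
    exists f, nondecr le f /\
      forall (Y : 'I_n.+1 -> ivl R) (j : 'I_n.+1),
        (forall i, le (Y i) (Y j)) -> G Y = f (Y j))) ->
  forall m : {set 'I_n.+1} -> ivl R, iv_fuzzy_measure le m -> S_nondecr le F G m.
Proof.
move=> adm; have [refl _ trans tot _] := adm.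
case=> [[HF [f [Hf HG]]]|[HF1 [HF2 [f [Hf HG]]]]] m [m0 m1 mmon] X Y s t HXY sX tY;
  rewrite /Sval.
- rewrite !HG; apply: Hf.
  have ET : forall u : {perm 'I_n.+1}, Eset u ord0 = setT.
    move=> u; apply/setP => x; rewrite inE; apply/imsetP.
    by exists (u^-1 x)%g; rewrite ?inE ?permKV.
  rewrite !ET m1; apply: HF.
  apply: (trans _ (X (t ord0))); last exact: HXY.
  have -> : t ord0 = s (s^-1 (t ord0))%g by rewrite permKV.
  by apply: sX.
- set V := fun i => _; set W := fun i => _.
  have [j Hj] := fin_max V adm.
  have [k Hk] := fin_max W adm.
  rewrite (HG _ _ Hj) (HG _ _ Hk); apply: Hf.
  set A := Eset s j.
  have P0 : t (t^-1 (s j))%g \in A by rewrite permKV; apply/imsetP; exists j; rewrite ?inE.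
  case: (@arg_minnP _ _ (fun k => t k \in A) (@nat_of_ord _) P0) => k0 Pk0 mink0.
  apply: (trans _ _ _ _ (Hk k0)); rewrite /V /W.
  apply: (trans _ (F (Y (t k0)) (m A))).
    apply: HF1; apply: (trans _ (X (t k0))); last exact: HXY.
    move/imsetP: Pk0 => [l]; rewrite inE => jl ->; exact: sX.
  apply: HF2; apply: mmon; apply/subsetP => x Hx.
  apply/imsetP; exists (t^-1 x)%g; rewrite ?permKV //.
  by rewrite inE; apply: mink0; rewrite permKV.
Qed.
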